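(* Let $M\ge2$ be an integer, $\phi\in\mathbb{R}$, and let $\varphi$ be a random variable on $[0,2\pi)$ with density $f(\varphi)=\frac{M}{2\pi}\frac{\mathrm{sinc}^2(\frac M2|\phi-\varphi|_{2\pi})}{\mathrm{sinc}^2(\frac12|\phi-\varphi|_{2\pi})}$. Then $\mathbb{E}[e^{i\varphi}]=\big(1-\frac1M\big)e^{i\phi}$ and $\mathbb{E}[\sin^2(\varphi-\phi)]=\frac1M$. Consequently $\big(1+\frac{1}{M-1}\big)e^{i\varphi}$ is an unbiased estimator of $e^{i\phi}$ with variance $\Theta(1/M)$.
   Context: $|x|_{2\pi}:=\min\{|x-2\pi\ell|:\ell\in\mathbb{Z}\}$; $\mathrm{sinc}(x)=\sin(x)/x$ for $x\neq0$, $\mathrm{sinc}(0)=1$. This density is exactly the output distribution of the randomized phase estimation procedure: sample $u\sim\mathrm{Unif}[0,1)$, apply the phases $e^{-2\pi i u k/M}$ to $\frac1{\sqrt M}\sum_{k<M}e^{i\phi k}\ket k$, apply the inverse Fourier transform over $\mathbb{Z}_M$, measure $j$, output $\frac{2\pi}{M}(j+u)$. *)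

(* Defs.v *)
From Stdlib Require Import Reals ZArith.
From Coquelicot Require Import Coquelicot.
Open Scope R_scope.

(* |x|_{2pi} := min { |x - 2 pi l| : l in Z } (taken as the infimum, which is attained). *)
Definition dist2pi (x : R) : R :=
  real (Glb_Rbar (fun d => exists l : Z, d = Rabs (x - 2 * PI * IZR l))).

Definition sinc (x : R) : R := if Req_EM_T x 0 then 1 else sin x / x.

Definition qpe_density (M : nat) (phi v : R) : R :=
  INR M / (2 * PI) *
  ((sinc (INR M / 2 * dist2pi (phi - v))) ^ 2 / (sinc (/ 2 * dist2pi (phi - v))) ^ 2).

Definition cexpi (t : R) : C := (cos t, sin t).

Definition Expect (M : nat) (phi : R) (g : R -> R) : R :=
  RInt (fun v => qpe_density M phi v * g v) 0 (2 * PI).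

Definition CExpect (M : nat) (phi : R) (g : R -> C) : C :=
  (Expect M phi (fun v => Re (g v)), Expect M phi (fun v => Im (g v))).

Definition estimator (M : nat) (v : R) : C :=
  Cmult (RtoC (1 + / (INR M - 1))) (cexpi v).

Definition CVariance (M : nat) (phi : R) (X : R -> C) : R :=
  Expect M phi (fun v => (Cmod (Cminus (X v) (CExpect M phi X))) ^ 2).

(* Main.v *)
Require Import Defs.
From Stdlib Require Import Reals Lra Lia ZArith FunctionalExtensionality.
From Coquelicot Require Import Coquelicot.
Open Scope R_scope.
Local Arguments INR : simpl never.

Local Arguments INR : simpl never.

Lemma per_Z (z : Z) (x : R) :
  sin (x + 2 * IZR z * PI) = sin x /\ cos (x + 2 * IZR z * PI) = cos x.
Proof.
  destruct z as [|p|p].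
  - rewrite Rmult_0_r, Rmult_0_l, Rplus_0_r; auto.
  - replace (IZR (Z.pos p)) with (INR (Pos.to_nat p)).
    + split; [apply sin_period | apply cos_period].
    + rewrite INR_IZR_INZ, positive_nat_Z; reflexivity.
  - replace (IZR (Z.neg p)) with (- INR (Pos.to_nat p)).
    + set (y := x + 2 * - INR (Pos.to_nat p) * PI).
      rewrite <- (sin_period y (Pos.to_nat p)), <- (cos_period y (Pos.to_nat p)).
      unfold y; split; f_equal; ring.
    + rewrite INR_IZR_INZ, positive_nat_Z, <- opp_IZR; reflexivity.
Qed.

Lemma base_int (m : Z) (c : R) :
  is_RInt (fun v => cos (c + IZR m * v)) 0 (2 * PI)
    (if Z.eq_dec m 0 then 2 * PI * cos c else 0).
Proof.
  destruct (Z.eq_dec m 0) as [->|Hm].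
  - replace (2 * PI * cos c) with (scal (2 * PI - 0) (cos c)).
    + apply (is_RInt_ext (fun _ => cos c)); [|apply (@is_RInt_const R_NormedModule)].
      intros x _; simpl. rewrite Rmult_0_l, Rplus_0_r; reflexivity.
    + unfold scal; simpl; unfold mult; simpl. ring.
  - assert (Hm' : IZR m <> 0) by (apply not_0_IZR; auto).
    replace 0 with (minus ((fun v => sin (c + IZR m * v) / IZR m) (2 * PI))
                          ((fun v => sin (c + IZR m * v) / IZR m) 0)) at 2.
    + apply (@is_RInt_derive R_CompleteNormedModule (fun v => sin (c + IZR m * v) / IZR m)).
      * intros x _. auto_derive; auto. field; auto.
      * intros x _. exact (ex_derive_continuous (K:=R_AbsRing) (V:=R_NormedModule) (fun v => cos (c + IZR m * v)) x ltac:(auto_derive; auto)).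
    + simpl. unfold minus, plus, opp; simpl.
      replace (c + IZR m * (2 * PI)) with (c + 2 * IZR m * PI) by ring.
      rewrite (proj1 (per_Z m c)). rewrite Rmult_0_r, Rplus_0_r. field; auto.
Qed.

Lemma prodK (phi psi : R) (k j : nat) :
  is_RInt (fun v => cos (INR k * (phi - v)) * cos (INR j * v - psi)) 0 (2 * PI)
    (if Nat.eq_dec k j then (if Nat.eq_dec k 0 then 2 * PI * cos psi
                             else PI * cos (INR k * phi - psi)) else 0).
Proof.
  set (m1 := (Z.of_nat j - Z.of_nat k)%Z).
  set (m2 := (- (Z.of_nat k + Z.of_nat j))%Z).
  assert (H := is_RInt_plus _ _ _ _ _ _
    (is_RInt_scal _ _ _ (/2) _ (base_int m1 (INR k * phi - psi)))
    (is_RInt_scal _ _ _ (/2) _ (base_int m2 (INR k * phi + psi)))).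
  apply (is_RInt_ext _ (fun v => cos (INR k * (phi - v)) * cos (INR j * v - psi))) in H.
  2:{ intros x _. unfold plus, scal; simpl; unfold mult; simpl.
      unfold m1, m2. rewrite opp_IZR, minus_IZR, plus_IZR, <- !INR_IZR_INZ.
      replace (INR k * phi - psi + (INR j - INR k) * x) with
        ((INR k * (phi - x)) + (INR j * x - psi)) by ring.
      replace (INR k * phi + psi + - (INR k + INR j) * x) with
        ((INR k * (phi - x)) - (INR j * x - psi)) by ring.
      set (A := INR k * (phi - x)); set (B := INR j * x - psi). rewrite (cos_plus A B), (cos_minus A B). field. }
  revert H. unfold plus, scal; simpl; unfold mult; simpl.
  destruct (Z.eq_dec m1 0) as [E1|E1]; destruct (Z.eq_dec m2 0) as [E2|E2];
  destruct (Nat.eq_dec k j) as [E3|E3]; destruct (Nat.eq_dec k 0) as [E4|E4];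
  unfold m1, m2 in *; try (exfalso; lia); intro H.
  - subst. simpl in H. replace (2 * PI * cos psi) with
     (/ 2 * (2 * PI * cos (0 * phi - psi)) + / 2 * (2 * PI * cos (0 * phi + psi))); auto.
    rewrite Rmult_0_l, Rminus_0_l, Rplus_0_l, cos_neg. field.
  - subst. replace (PI * cos (INR j * phi - psi)) with (/ 2 * (2 * PI * cos (INR j * phi - psi)) + / 2 * 0) by field. auto.
  - rewrite Rmult_0_r, Rplus_0_r in H; exact H.
  - rewrite Rmult_0_r, Rplus_0_r in H; exact H.
Qed.

Fixpoint Dk (n : nat) (t : R) : R :=
  match n with O => 1 | S n' => Dk n' t + 2 * cos (INR n * t) end.
Fixpoint Pk (n : nat) (t : R) : R :=
  match n with O => 0 | S n' => Pk n' t + Dk n' t end.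

Lemma D_int (phi psi : R) (n j : nat) :
  is_RInt (fun v => Dk n (phi - v) * cos (INR j * v - psi)) 0 (2 * PI)
    (if le_dec j n then 2 * PI * cos (INR j * phi - psi) else 0).
Proof.
  induction n as [|n IH].
  - assert (H := prodK phi psi 0 j).
    apply (is_RInt_ext _ (fun v => Dk 0 (phi - v) * cos (INR j * v - psi))) in H.
    2:{ intros x _. simpl. rewrite Rmult_0_l, cos_0. reflexivity. }
    revert H. destruct (Nat.eq_dec 0 j) as [E|E]; destruct (le_dec j 0) as [E'|E'];
      try (exfalso; lia); simpl; auto.
    subst. simpl. rewrite Rmult_0_l, Rminus_0_l, cos_neg; auto.
  - assert (H := is_RInt_plus _ _ _ _ _ _ IH
      (is_RInt_scal _ _ _ 2 _ (prodK phi psi (S n) j))).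
    destruct (le_dec j n) as [E|E]; destruct (Nat.eq_dec (S n) j) as [E'|E'];
      destruct (Nat.eq_dec (S n) 0) as [E0|E0];
      destruct (le_dec j (S n)) as [E''|E'']; try (exfalso; lia);
    apply (is_RInt_ext _ (fun v => Dk (S n) (phi - v) * cos (INR j * v - psi))) in H;
    try (intros x _; unfold plus, scal; simpl; unfold mult; simpl; ring);
    revert H; unfold plus, scal; simpl; unfold mult; simpl; intro H.
    + rewrite Rmult_0_r, Rplus_0_r in H; exact H.
    + subst.
      rewrite Rplus_0_l in H. replace (2 * PI * cos (INR (S n) * phi - psi))
        with (2 * (PI * cos (INR (S n) * phi - psi))) by ring. exact H.
    + rewrite Rmult_0_r, Rplus_0_r in H; exact H.
Qed.

Lemma P_int (phi psi : R) (M j : nat) :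
  is_RInt (fun v => Pk M (phi - v) * cos (INR j * v - psi)) 0 (2 * PI)
    (INR (M - j) * (2 * PI * cos (INR j * phi - psi))).
Proof.
  induction M as [|M IH].
  - simpl. rewrite Rmult_0_l.
    apply (is_RInt_ext (fun _ => 0)).
    + intros x _; rewrite Rmult_0_l; reflexivity.
    + replace 0 with (scal (2 * PI - 0) 0) at 2.
      * apply (@is_RInt_const R_NormedModule).
      * unfold scal; simpl; unfold mult; simpl; ring.
  - assert (H := is_RInt_plus _ _ _ _ _ _ IH (D_int phi psi M j)).
    apply (is_RInt_ext _ (fun v => Pk (S M) (phi - v) * cos (INR j * v - psi))) in H.
    2:{ intros x _. unfold plus; simpl. ring. }
    unfold plus in H; simpl in H.
    destruct (le_dec j M) as [E|E].
    + replace (S M - j)%nat with (S (M - j)) by lia. rewrite S_INR.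
      replace ((INR (M - j) + 1) * (2 * PI * cos (INR j * phi - psi))) with
        (INR (M - j) * (2 * PI * cos (INR j * phi - psi)) + 2 * PI * cos (INR j * phi - psi)) by ring.
      exact H.
    + replace (S M - j)%nat with 0%nat by lia. replace (M - j)%nat with 0%nat in H by lia.
      rewrite INR_0, Rmult_0_l. rewrite INR_0, Rmult_0_l, Rplus_0_r in H. exact H.
Qed.


Lemma Dsin n t : sin (t / 2) * Dk n t = sin ((2 * INR n + 1) * t / 2).
Proof.
  induction n as [|n IH].
  - simpl. rewrite INR_0, Rmult_1_r. f_equal; field.
  - simpl Dk. rewrite Rmult_plus_distr_l, IH.
    set (a := INR (S n) * t). set (b := t / 2).
    replace ((2 * INR (S n) + 1) * t / 2) with (a + b) by (unfold a, b; rewrite S_INR; field).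
    replace ((2 * INR n + 1) * t / 2) with (a - b) by (unfold a, b; rewrite S_INR; field).
    rewrite sin_plus, sin_minus. ring.
Qed.

Lemma Fejer M t : sin (t / 2) ^ 2 * Pk M t = sin (INR M * t / 2) ^ 2.
Proof.
  induction M as [|M IH].
  - simpl. rewrite INR_0. replace (0 * t / 2) with 0 by field. rewrite sin_0. ring.
  - simpl Pk. replace (sin (t / 2) ^ 2 * (Pk M t + Dk M t)) with
      (sin (t / 2) ^ 2 * Pk M t + sin (t / 2) * (sin (t / 2) * Dk M t)) by ring.
    rewrite IH, Dsin.
    set (u := INR M * t / 2). set (w := t / 2).
    replace (INR (S M) * t / 2) with (u + w) by (unfold u, w; rewrite S_INR; field).
    replace ((2 * INR M + 1) * t / 2) with (2 * u + w) by (unfold u, w; field).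
    rewrite (sin_plus u w), (sin_plus (2 * u) w), sin_2a, cos_2a.
    assert (Hu : cos u ^ 2 = 1 - sin u ^ 2) by (rewrite <- (sin2_cos2 u); unfold Rsqr; ring).
    assert (Hw : cos w ^ 2 = 1 - sin w ^ 2) by (rewrite <- (sin2_cos2 w); unfold Rsqr; ring).
    transitivity (sin u ^ 2 * cos w ^ 2 + 2 * sin u * cos u * sin w * cos w + cos u ^ 2 * sin w ^ 2);
      [rewrite Hw; ring | ring].
Qed.

Lemma dist_char (x : R) :
  exists l : Z, dist2pi x = Rabs (x - 2 * PI * IZR l) /\ dist2pi x <= PI.
Proof.
  set (y := x / (2 * PI)).
  assert (HPI := PI_RGT_0).
  assert (Hx : x = 2 * PI * y) by (unfold y; field; lra).
  clearbody y.
  set (l0 := (up (y + / 2) - 1)%Z).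
  destruct (archimed (y + / 2)) as [A1 A2].
  assert (Hl0 : y - / 2 < IZR l0 <= y + / 2).
  { unfold l0; rewrite minus_IZR. generalize (IZR (up (y + / 2))) A1 A2. intros. clear -A0 A3. lra. }
  assert (B1 : 2 * PI * IZR l0 - PI <= x < 2 * PI * IZR l0 + PI).
  { rewrite Hx. destruct Hl0 as [H1 H2]. split.
    - apply Rmult_le_compat_l with (r := 2 * PI) in H2; [|lra]. lra.
    - apply Rmult_lt_compat_l with (r := 2 * PI) in H1; [|lra]. lra. }
  set (d0 := Rabs (x - 2 * PI * IZR l0)).
  assert (Hd0 : d0 <= PI) by (unfold d0; apply Rabs_le; lra).
  assert (Hmin : forall l : Z, d0 <= Rabs (x - 2 * PI * IZR l)).
  { intro l. destruct (Z.eq_dec l l0) as [->|Hne]; [apply Rle_refl|].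
    destruct (Z_lt_le_dec l l0) as [Hlt|Hle].
    - assert (IZR l <= IZR l0 - 1) by (rewrite <- minus_IZR; apply IZR_le; lia).
      apply Rmult_le_compat_l with (r := 2 * PI) in H; [|lra].
      assert (PI <= x - 2 * PI * IZR l) by lra.
      rewrite (Rabs_right (x - 2 * PI * IZR l)) by lra. lra.
    - assert (IZR l0 + 1 <= IZR l) by (rewrite <- plus_IZR; apply IZR_le; lia).
      apply Rmult_le_compat_l with (r := 2 * PI) in H; [|lra].
      assert (x - 2 * PI * IZR l <= - PI) by lra.
      rewrite (Rabs_left1 (x - 2 * PI * IZR l)) by lra. lra. }
  assert (Hg : dist2pi x = d0).
  { unfold dist2pi.
    rewrite (is_glb_Rbar_unique _ (Finite d0)); [reflexivity|].
    split.
    - intros z [l ->]. simpl. apply Hmin.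
    - intros b Hb. apply Hb. exists l0. reflexivity. }
  exists l0. rewrite Hg. split; [reflexivity|exact Hd0].
Qed.

Lemma Dk_ext n s t : (forall k, cos (INR k * s) = cos (INR k * t)) -> Dk n s = Dk n t.
Proof. intro H. induction n; simpl; [reflexivity|]. rewrite IHn, H. reflexivity. Qed.

Lemma Pk_ext n s t : (forall k, cos (INR k * s) = cos (INR k * t)) -> Pk n s = Pk n t.
Proof. intro H. induction n; simpl; [reflexivity|]. rewrite IHn, (Dk_ext n s t H). reflexivity. Qed.

Lemma Pk_zero M : Pk M 0 = INR M ^ 2.
Proof.
  assert (HD : forall n, Dk n 0 = 2 * INR n + 1).
  { induction n; simpl Dk. rewrite INR_0; ring. rewrite IHn, Rmult_0_r, cos_0, S_INR; ring. }
  induction M; simpl Pk. rewrite INR_0; ring. rewrite IHM, HD, S_INR; ring.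
Qed.

Lemma density_eq (M : nat) (phi v : R) : (1 <= M)%nat ->
  qpe_density M phi v = Pk M (phi - v) / (2 * PI * INR M).
Proof.
  intro HM.
  assert (HMr : 1 <= INR M) by (apply (le_INR 1); auto).
  assert (HPI := PI_RGT_0).
  destruct (dist_char (phi - v)) as [l [Hd HdPI]].
  set (d := dist2pi (phi - v)) in *.
  assert (HPd : Pk M (phi - v) = Pk M d).
  { apply Pk_ext. intro k. rewrite Hd.
    destruct (Rle_or_lt 0 (phi - v - 2 * PI * IZR l)) as [Hp|Hn].
    - rewrite Rabs_right by lra.
      replace (INR k * (phi - v - 2 * PI * IZR l)) with
        (INR k * (phi - v) + 2 * IZR (- (Z.of_nat k * l)) * PI)
        by (rewrite opp_IZR, mult_IZR, <- INR_IZR_INZ; ring).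
      rewrite (proj2 (per_Z _ _)). reflexivity.
    - rewrite Rabs_left by lra.
      replace (INR k * - (phi - v - 2 * PI * IZR l)) with
        (- (INR k * (phi - v) + 2 * IZR (- (Z.of_nat k * l)) * PI))
        by (rewrite opp_IZR, mult_IZR, <- INR_IZR_INZ; ring).
      rewrite cos_neg, (proj2 (per_Z _ _)). reflexivity. }
  rewrite HPd. unfold qpe_density. fold d.
  assert (Hd0 : 0 <= d) by (rewrite Hd; apply Rabs_pos).
  destruct (Req_dec d 0) as [Hz|Hnz].
  - rewrite Hz, !Rmult_0_r, Pk_zero. unfold sinc.
    destruct (Req_EM_T 0 0) as [_|C]; [|exfalso; auto].
    field. split; lra.
  - unfold sinc.
    destruct (Req_EM_T (INR M / 2 * d) 0) as [C|_].
    { exfalso. assert (0 < INR M / 2 * d) by (apply Rmult_lt_0_compat; lra). lra. }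
    destruct (Req_EM_T (/ 2 * d) 0) as [C|_]; [exfalso; lra|].
    assert (Hs : 0 < sin (d / 2)) by (apply sin_gt_0; lra).
    assert (HF := Fejer M d).
    assert (HP : Pk M d = sin (INR M * d / 2) ^ 2 / sin (d / 2) ^ 2).
    { rewrite <- HF. field. lra. }
    rewrite HP.
    replace (INR M / 2 * d) with (INR M * d / 2) by field.
    replace (/ 2 * d) with (d / 2) by field.
    field. repeat split; lra.
Qed.


Lemma is_RInt_val (f : R -> R) a b (l l' : R) : is_RInt f a b l -> l = l' -> is_RInt f a b l'.
Proof. intros H ->; exact H. Qed.

Lemma Expect_aff (M : nat) (phi a b psi : R) (j : nat) : (1 <= M)%nat ->
  Expect M phi (fun v => a + b * cos (INR j * v - psi)) =
  a + b * (INR (M - j) / INR M) * cos (INR j * phi - psi).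
Proof.
  intro HM.
  assert (HMr : 1 <= INR M) by (apply (le_INR 1); auto).
  assert (HPI := PI_RGT_0).
  unfold Expect. apply is_RInt_unique.
  assert (H := is_RInt_plus _ _ _ _ _ _
    (is_RInt_scal _ _ _ (a / (2 * PI * INR M)) _ (P_int phi 0 M 0))
    (is_RInt_scal _ _ _ (b / (2 * PI * INR M)) _ (P_int phi psi M j))).
  apply (is_RInt_ext _ (fun v => qpe_density M phi v * (a + b * cos (INR j * v - psi)))) in H.
  - eapply is_RInt_val; [exact H|].
    unfold plus, scal; simpl; unfold mult; simpl.
    rewrite Nat.sub_0_r, INR_0, Rmult_0_l, Rminus_0_r, cos_0.
    field. split; lra.
  - intros x _. rewrite density_eq by exact HM.
    unfold plus, scal; simpl; unfold mult; simpl.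
    rewrite INR_0, Rmult_0_l, Rminus_0_r, cos_0.
    field. split; lra.
Qed.

Lemma Expect_ext M phi g1 g2 : (forall v, g1 v = g2 v) -> Expect M phi g1 = Expect M phi g2.
Proof. intro H. apply functional_extensionality in H. rewrite H. reflexivity. Qed.


Lemma part1 (M : nat) (phi : R) : (2 <= M)%nat ->
     CExpect M phi cexpi = Cmult (RtoC (1 - / INR M)) (cexpi phi) /\
     Expect M phi (fun v => (sin (v - phi)) ^ 2) = / INR M /\
     CExpect M phi (estimator M) = cexpi phi.
Proof.
  intro HM.
  assert (HM1 : (1 <= M)%nat) by lia.
  assert (HMr : 2 <= INR M) by (apply (le_INR 2); auto).
  assert (Hsub1 : INR (M - 1) = INR M - 1) by (rewrite minus_INR by lia; rewrite INR_1; ring).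
  assert (Hsub2 : INR (M - 2) = INR M - 2) by (rewrite minus_INR by lia; reflexivity).
  assert (Hcos : forall v, cos v = 0 + 1 * cos (INR 1 * v - 0)).
  { intro v. rewrite INR_1. replace (1 * v - 0) with v by ring. ring. }
  assert (Hsin : forall v, sin v = 0 + 1 * cos (INR 1 * v - PI / 2)).
  { intro v. rewrite INR_1. replace (1 * v - PI / 2) with (- (PI / 2 - v)) by ring.
    rewrite cos_neg, cos_shift. ring. }
  split; [|split].
  - unfold CExpect.
    rewrite (Expect_ext M phi (fun v => Re (cexpi v)) _ (fun v => Hcos v)).
    rewrite (Expect_ext M phi (fun v => Im (cexpi v)) _ (fun v => Hsin v)).
    rewrite !Expect_aff by exact HM1.
    rewrite Hsub1, INR_1, !Rmult_1_l, Rminus_0_r.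
    replace (phi - PI / 2) with (- (PI / 2 - phi)) by ring.
    rewrite cos_neg, cos_shift.
    unfold Cmult, RtoC, cexpi; simpl.
    apply injective_projections; simpl; field; lra.
  - rewrite (Expect_ext M phi _ (fun v => / 2 + (- / 2) * cos (INR 2 * v - 2 * phi))).
    + rewrite Expect_aff by exact HM1. rewrite Hsub2.
      replace (INR 2 * phi - 2 * phi) with 0 by (unfold INR; ring). rewrite cos_0.
      field. lra.
    + intro v. cbv beta. replace (INR 2 * v - 2 * phi) with (2 * (v - phi)) by (unfold INR; ring).
      rewrite cos_2a_sin. field.
  - unfold CExpect, estimator.
    set (a := 1 + / (INR M - 1)).
    rewrite (Expect_ext M phi _ (fun v => 0 + a * cos (INR 1 * v - 0))).
    2:{ intro v. unfold Cmult, RtoC, cexpi; simpl. rewrite INR_1, Rmult_1_l, Rminus_0_r. ring. }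
    rewrite (Expect_ext M phi (fun v => Im _) (fun v => 0 + a * cos (INR 1 * v - PI / 2))).
    2:{ intro v. unfold Cmult, RtoC, cexpi; simpl. rewrite (Hsin v). ring. }
    rewrite !Expect_aff by exact HM1.
    rewrite Hsub1, INR_1, !Rmult_1_l, Rminus_0_r.
    replace (phi - PI / 2) with (- (PI / 2 - phi)) by ring.
    rewrite cos_neg, cos_shift.
    unfold cexpi, a. apply injective_projections; simpl; field; lra.
Qed.

Lemma var_val (M : nat) (phi : R) : (2 <= M)%nat ->
  CVariance M phi (estimator M) = (1 + / (INR M - 1)) ^ 2 - 1.
Proof.
  intro HM.
  assert (HM1 : (1 <= M)%nat) by lia.
  assert (HMr : 2 <= INR M) by (apply (le_INR 2); auto).
  assert (Hsub1 : INR (M - 1) = INR M - 1) by (rewrite minus_INR by lia; rewrite INR_1; ring).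
  unfold CVariance. rewrite (proj2 (proj2 (part1 M phi HM))).
  set (a := 1 + / (INR M - 1)).
  rewrite (Expect_ext M phi _ (fun v => (a ^ 2 + 1) + (- 2 * a) * cos (INR 1 * v - phi))).
  - rewrite Expect_aff by exact HM1. rewrite Hsub1, INR_1, Rmult_1_l, Rminus_diag, cos_0.
    unfold a. field. lra.
  - intro v. unfold estimator. fold a. unfold Cmod, Cminus, Cmult, RtoC, cexpi; simpl.
    rewrite !Rmult_1_r, sqrt_sqrt by (apply Rplus_le_le_0_compat; apply Rle_0_sqr).
    rewrite INR_1, Rmult_1_l, cos_minus.
    assert (H1 := sin2_cos2 v). assert (H2 := sin2_cos2 phi). unfold Rsqr in *.
    unfold plus, opp; simpl. nra.
Qed.

Theorem mainTheorem9 :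
  (forall (M : nat) (phi : R), (2 <= M)%nat ->
     CExpect M phi cexpi = Cmult (RtoC (1 - / INR M)) (cexpi phi) /\
     Expect M phi (fun v => (sin (v - phi)) ^ 2) = / INR M /\
     CExpect M phi (estimator M) = cexpi phi) /\
  (exists c1 c2 : R, 0 < c1 /\ 0 < c2 /\
     forall (M : nat) (phi : R), (2 <= M)%nat ->
       c1 / INR M <= CVariance M phi (estimator M) <= c2 / INR M).
Proof.
  split; [exact part1|].
  exists 1, 6. split; [lra|]. split; [lra|].
  intros M phi HM. rewrite var_val by exact HM.
  assert (HMr : 2 <= INR M) by (apply (le_INR 2); auto).
  set (m := INR M) in *.
  assert (e1 : (1 + / (m - 1)) ^ 2 - 1 - 1 / m = (m ^ 2 + m - 1) * / (m * (m - 1) ^ 2))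
    by (field; lra).
  assert (e2 : 6 / m - ((1 + / (m - 1)) ^ 2 - 1) = ((m - 2) * (4 * m - 3)) * / (m * (m - 1) ^ 2))
    by (field; lra).
  assert (Hp : 0 < / (m * (m - 1) ^ 2)) by (apply Rinv_0_lt_compat; nra).
  assert (0 <= (m ^ 2 + m - 1) * / (m * (m - 1) ^ 2)) by (apply Rmult_le_pos; nra).
  assert (0 <= ((m - 2) * (4 * m - 3)) * / (m * (m - 1) ^ 2)) by (apply Rmult_le_pos; nra).
  split; lra.
Qed.
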